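(* The operator $J$ with domain $\mathcal F(\Gamma)$, viewed as a symmetric operator in $\ell^2(\Gamma)$, has defect indices not greater than $1$; i.e. for every nonreal $z$, the space of $v\in\ell^2(\Gamma)$ with $Jv=zv$ has dimension at most $1$.
   Context: Let $\Gamma$ be an infinite connected tree whose vertices are arranged in levels $\ell(x)\in\{0,1,2,\dots\}$: every vertex $x$ is adjacent to exactly one vertex $x'$ with $\ell(x')=\ell(x)+1$; for $\ell(x)\ge 1$ the set $N_x=\{y:\ y'=x\}$ of neighbours of $x$ on level $\ell(x)-1$ is finite and nonempty; $N_x=\emptyset$ if $\ell(x)=0$; there are no other edges. Fix $\lambda_x>0$, $\beta_x\in\mathbb R$ for $x\in\Gamma$. The Jacobi matrix $J$ acts on functions $v:\Gamma\to\mathbb C$ by $(Jv)(x)=\lambda_x v(x')+\beta_x v(x)+\sum_{y\in N_x}\lambda_y v(y)$. $\mathcal F(\Gamma)$ denotes the finitely supported functions on $\Gamma$; $\ell^2(\Gamma)$ has inner product $(u,v)=\sum_{x}u(x)\overline{v(x)}$, and $J$ with domain $\mathcal F(\Gamma)$ is a symmetric operator in $\ell^2(\Gamma)$. *)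

(* Defs.v *)
From Stdlib Require Import Reals List.
Import ListNotations.
Open Scope R_scope.

Record Cx : Type := mkC { re : R; im : R }.
Definition C0 : Cx := mkC 0 0.
Definition RtoC (r : R) : Cx := mkC r 0.
Definition Cadd (a b : Cx) : Cx := mkC (re a + re b) (im a + im b).
Definition Cmul (a b : Cx) : Cx :=
  mkC (re a * re b - im a * im b) (re a * im b + im a * re b).
Definition Cnorm2 (a : Cx) : R := re a * re a + im a * im a.
Definition Csum (l : list Cx) : Cx := fold_right Cadd C0 l.

(* A leveled tree Gamma: vertex type V, level function, the unique upper
   neighbour x' = parent x, and the finite list ch x enumerating N_x. *)
Record LevelTree (V : Type) : Type := {
  level : V -> nat;
  parent : V -> V;
  ch : V -> list V;
  level_parent : forall x, level (parent x) = S (level x);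
  ch_NoDup : forall x, NoDup (ch x);
  ch_spec : forall x y, In y (ch x) <-> parent y = x;
  ch_nonempty : forall x, (1 <= level x)%nat -> ch x <> [];
  ch_level0 : forall x, level x = 0%nat -> ch x = [];
  connected : forall x y : V, exists n m : nat,
      Nat.iter n parent x = Nat.iter m parent y;
  infinite : forall l : list V, exists x : V, ~ In x l
}.
Arguments level {V} _ _.
Arguments parent {V} _ _.
Arguments ch {V} _ _.

(* v belongs to l^2(Gamma): sum_x |v x|^2 < infinity, i.e. the finite partial
   sums over sets of distinct vertices are uniformly bounded. *)
Definition in_l2 {V : Type} (v : V -> Cx) : Prop :=
  exists M : R, forall l : list V, NoDup l ->
    fold_right Rplus 0 (map (fun x => Cnorm2 (v x)) l) <= M.

Definition Jac {V : Type} (G : LevelTree V) (lam beta : V -> R) (v : V -> Cx)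
  (x : V) : Cx :=
  Cadd (Cadd (Cmul (RtoC (lam x)) (v (parent G x)))
             (Cmul (RtoC (beta x)) (v x)))
       (Csum (map (fun y => Cmul (RtoC (lam y)) (v y)) (ch G x))).

Definition defect_space {V : Type} (G : LevelTree V) (lam beta : V -> R)
  (z : Cx) (v : V -> Cx) : Prop :=
  in_l2 v /\ forall x, Jac G lam beta v x = Cmul z (v x).

(* Main.v *)
Require Import Defs.
From Stdlib Require Import Reals List Lra Psatz Classical.
Open Scope R_scope.

Definition sumR {V : Type} (f : V -> R) (l : list V) : R :=
  fold_right (fun y acc => f y + acc) 0 l.

Lemma sumR_ext {V : Type} (f g : V -> R) (l : list V) :
  (forall y, In y l -> f y = g y) -> sumR f l = sumR g l.
Proof.
  induction l as [|a l IH]; intros H; simpl; auto.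
  rewrite H by (left; auto). rewrite IH; auto. intros; apply H; right; auto.
Qed.

Lemma sumR_nonneg {V : Type} (f : V -> R) (l : list V) :
  (forall y, 0 <= f y) -> 0 <= sumR f l.
Proof. intros H; induction l; simpl; auto; try lra. specialize (H a); lra. Qed.

Lemma sumR_le {V : Type} (f : V -> R) (l : list V) c :
  (forall y, 0 <= f y) -> In c l -> f c <= sumR f l.
Proof.
  intros H; induction l as [|a l IH]; simpl; intros Hi; [contradiction|].
  destruct Hi as [->|Hi].
  - pose proof (sumR_nonneg f l H); lra.
  - specialize (IH Hi); specialize (H a); lra.
Qed.

Lemma sumR_scale {V : Type} (f : V -> R) (l : list V) c :
  sumR (fun y => c * f y) l = c * sumR f l.
Proof. induction l; simpl; [ring|]. rewrite IHl; ring. Qed.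

Lemma sumR_lin2 {V : Type} (f g : V -> R) (l : list V) c d :
  sumR (fun y => f y * c - g y * d) l = sumR f l * c - sumR g l * d.
Proof. induction l; simpl; [ring|]. rewrite IHl; ring. Qed.

Lemma sumR_neg {V : Type} (f : V -> R) (l : list V) :
  sumR (fun y => - f y) l = - sumR f l.
Proof. induction l; simpl; [ring|]. rewrite IHl; ring. Qed.

Lemma Cx_eq (a b : Cx) : re a = re b -> im a = im b -> a = b.
Proof. destruct a, b; simpl; intros -> ->; reflexivity. Qed.

Fixpoint Sf {V : Type} (G : LevelTree V) (w : V -> Cx) (n : nat) (x : V) : R :=
  match n with
  | O => Cnorm2 (w x)
  | S k => Cnorm2 (w x) + sumR (Sf G w k) (ch G x)
  end.

Definition St {V : Type} (G : LevelTree V) (w : V -> Cx) (x : V) : R :=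
  Sf G w (level G x) x.

Lemma Cnorm2_nonneg a : 0 <= Cnorm2 a.
Proof. unfold Cnorm2; nra. Qed.

Lemma Sf_nonneg {V : Type} (G : LevelTree V) w n x : 0 <= Sf G w n x.
Proof.
  revert x; induction n; intros x; simpl.
  - apply Cnorm2_nonneg.
  - pose proof (Cnorm2_nonneg (w x)). pose proof (sumR_nonneg (Sf G w n) (ch G x) IHn). lra.
Qed.

Lemma St_nonneg {V : Type} (G : LevelTree V) w x : 0 <= St G w x.
Proof. apply Sf_nonneg. Qed.

Lemma St_eq {V : Type} (G : LevelTree V) w x :
  St G w x = Cnorm2 (w x) + sumR (St G w) (ch G x).
Proof.
  unfold St. destruct (level G x) eqn:E.
  - simpl. rewrite (ch_level0 V G x E). simpl. ring.
  - simpl. f_equal. apply sumR_ext. intros y Hy.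
    apply (ch_spec V G) in Hy. rewrite <- Hy in E. rewrite level_parent in E.
    injection E as E. rewrite E. reflexivity.
Qed.

Lemma St_child {V : Type} (G : LevelTree V) w c :
  St G w (parent G c) = 0 -> St G w c = 0.
Proof.
  intros H. rewrite St_eq in H.
  assert (Hin : In c (ch G (parent G c))) by (apply (ch_spec V G); reflexivity).
  pose proof (sumR_le (St G w) _ c (St_nonneg G w) Hin).
  pose proof (Cnorm2_nonneg (w (parent G c))). pose proof (St_nonneg G w c). lra.
Qed.

Lemma St_desc {V : Type} (G : LevelTree V) w n y :
  St G w (Nat.iter n (parent G) y) = 0 -> St G w y = 0.
Proof.
  revert y; induction n; intros y H; simpl in *; auto.
  apply IHn. apply St_child. exact H.
Qed.

Lemma St_zero_w {V : Type} (G : LevelTree V) w y : St G w y = 0 -> w y = C0.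
Proof.
  intros H. rewrite St_eq in H.
  pose proof (sumR_nonneg (St G w) (ch G y) (St_nonneg G w)).
  pose proof (Cnorm2_nonneg (w y)).
  assert (Cnorm2 (w y) = 0) by lra. unfold Cnorm2 in *.
  apply Cx_eq; simpl; nra.
Qed.

Lemma Csum_re {V : Type} (lam : V -> R) (w : V -> Cx) l :
  re (Csum (map (fun y => Cmul (RtoC (lam y)) (w y)) l)) = sumR (fun y => lam y * re (w y)) l.
Proof. induction l; simpl; [reflexivity|]. rewrite IHl; simpl; ring. Qed.

Lemma Csum_im {V : Type} (lam : V -> R) (w : V -> Cx) l :
  im (Csum (map (fun y => Cmul (RtoC (lam y)) (w y)) l)) = sumR (fun y => lam y * im (w y)) l.
Proof. induction l; simpl; [reflexivity|]. rewrite IHl; simpl; ring. Qed.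

Lemma Csum_lin {V : Type} (lam : V -> R) (u v : V -> Cx) a b l :
  Csum (map (fun y => Cmul (RtoC (lam y)) (Cadd (Cmul a (u y)) (Cmul b (v y)))) l) =
  Cadd (Cmul a (Csum (map (fun y => Cmul (RtoC (lam y)) (u y)) l)))
       (Cmul b (Csum (map (fun y => Cmul (RtoC (lam y)) (v y)) l))).
Proof.
  induction l; simpl.
  - apply Cx_eq; unfold C0; simpl; ring.
  - rewrite IHl. apply Cx_eq; simpl; ring.
Qed.

Definition imc (A B : Cx) : R := im A * re B - re A * im B.

Lemma St_ident {V : Type} (G : LevelTree V) lam beta z w
  (hw : forall x, Jac G lam beta w x = Cmul z (w x)) :
  forall n x, level G x = n ->
    im z * St G w x = lam x * imc (w (parent G x)) (w x).
Proof.
  induction n; intros x Hx.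
  - rewrite St_eq, (ch_level0 V G x Hx). simpl.
    specialize (hw x). unfold Jac in hw. rewrite (ch_level0 V G x Hx) in hw.
    simpl in hw.
    assert (E1 := f_equal re hw). assert (E2 := f_equal im hw). simpl in E1, E2.
    unfold imc, Cnorm2.
    pose proof (f_equal (fun t => t * re (w x)) E2) as F2.
    pose proof (f_equal (fun t => t * im (w x)) E1) as F1.
    cbv beta in F1, F2. nra.
  - rewrite St_eq.
    assert (IHc : sumR (fun y => im z * St G w y) (ch G x) =
                  sumR (fun y => - (lam y * im (w y)) * re (w x) - - (lam y * re (w y)) * im (w x)) (ch G x)).
    { apply sumR_ext. intros y Hy. apply (ch_spec V G) in Hy.
      rewrite IHn.
      - rewrite Hy. unfold imc. ring.
      - rewrite <- Hy in Hx. rewrite level_parent in Hx. injection Hx; auto. }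
    rewrite sumR_scale, sumR_lin2, !sumR_neg in IHc.
    specialize (hw x). unfold Jac in hw.
    assert (E1 := f_equal re hw). assert (E2 := f_equal im hw). simpl in E1, E2.
    rewrite Csum_re in E1. rewrite Csum_im in E2.
    unfold imc, Cnorm2.
    pose proof (f_equal (fun t => t * re (w x)) E2) as F2.
    pose proof (f_equal (fun t => t * im (w x)) E1) as F1.
    cbv beta in F1, F2. nra.
Qed.

Theorem proposition2 (V : Type) (G : LevelTree V) (lam beta : V -> R)
  (hlam : forall x, 0 < lam x) (z : Cx) (hz : im z <> 0)
  (u v : V -> Cx) (hu : defect_space G lam beta z u)
  (hv : defect_space G lam beta z v) :
  exists a b : Cx, (a <> C0 \/ b <> C0) /\
    forall x, Cadd (Cmul a (u x)) (Cmul b (v x)) = C0.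
Proof.
  destruct (infinite V G nil) as [x0 _].
  assert (Hab : exists a b : Cx, (a <> C0 \/ b <> C0) /\
                  Cadd (Cmul a (u x0)) (Cmul b (v x0)) = C0).
  { destruct (classic (u x0 = C0 /\ v x0 = C0)) as [[H1 H2]|H].
    - exists (mkC 1 0), C0. split.
      + left. intros E. injection E. lra.
      + rewrite H1, H2. apply Cx_eq; unfold C0; simpl; ring.
    - exists (v x0), (mkC (- re (u x0)) (- im (u x0))). split.
      + apply not_and_or in H. destruct H as [H|H]; [right|left]; auto.
        intros E. apply H. injection E as E1 E2. apply Cx_eq; unfold C0; simpl; lra.
      + apply Cx_eq; unfold C0; simpl; ring. }
  destruct Hab as [a [b [Hnz H0]]].
  exists a, b. split; auto.
  set (w := fun x => Cadd (Cmul a (u x)) (Cmul b (v x))).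
  assert (hw : forall x, Jac G lam beta w x = Cmul z (w x)).
  { intros x. unfold Jac, w. rewrite Csum_lin.
    destruct hu as [_ hu']. destruct hv as [_ hv'].
    specialize (hu' x). specialize (hv' x). unfold Jac in hu', hv'.
    assert (A1 := f_equal re hu'). assert (A2 := f_equal im hu').
    assert (B1 := f_equal re hv'). assert (B2 := f_equal im hv').
    simpl in A1, A2, B1, B2.
    apply Cx_eq; simpl; nra. }
  assert (Up : forall k, w (Nat.iter k (parent G) x0) = C0).
  { induction k; simpl; auto.
    set (p := Nat.iter k (parent G) x0) in *.
    assert (Sp : St G w p = 0).
    { pose proof (St_ident G lam beta z w hw (level G p) p eq_refl) as I.
      rewrite IHk in I. unfold imc, C0 in I. simpl in I.
      apply (Rmult_eq_reg_l (im z)); auto. lra. }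
    assert (Hc : forall y, In y (ch G p) -> w y = C0).
    { intros y Hy. apply (St_zero_w G). apply (ch_spec V G) in Hy.
      apply (St_child G). rewrite Hy. exact Sp. }
    specialize (hw p). unfold Jac in hw. rewrite IHk in hw.
    assert (Hs : Csum (map (fun y => Cmul (RtoC (lam y)) (w y)) (ch G p)) = C0).
    { clear -Hc. induction (ch G p); simpl; auto.
      rewrite IHl by (intros; apply Hc; simpl; auto).
      rewrite Hc by (simpl; auto). apply Cx_eq; unfold C0; simpl; ring. }
    rewrite Hs in hw.
    assert (E1 := f_equal re hw). assert (E2 := f_equal im hw).
    unfold C0 in E1, E2; simpl in E1, E2.
    pose proof (hlam p).
    apply Cx_eq; unfold C0; simpl.
    - apply (Rmult_eq_reg_l (lam p)); lra.
    - apply (Rmult_eq_reg_l (lam p)); lra. }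
  intros y. fold (w y).
  destruct (connected V G y x0) as [n [m Hnm]].
  apply (St_zero_w G). apply (St_desc G w n). rewrite Hnm.
  pose proof (St_ident G lam beta z w hw _ (Nat.iter m (parent G) x0) eq_refl) as I.
  rewrite Up in I. unfold imc, C0 in I. simpl in I.
  apply (Rmult_eq_reg_l (im z)); auto. lra.
Qed.
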